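(* Let $((F,\boxplus,\boxdot),(F,\cdot))$ be a left near-vector space (the vector set and the scalar group having the same underlying set $F$) such that $F\boxdot 1=\{\alpha\boxdot1:\alpha\in F\}=F$. Then for every $\gamma\in F\setminus\{0\}$, $\gamma$ lies in the quasi-kernel, the operation $\boxplus_\gamma:=+_\gamma$ on $F$ is well-defined, $(F,\boxplus_\gamma,\cdot)$ is a left near-field, and $((F,\boxplus,\boxdot),(F,\cdot))$ is isomorphic as a near-vector space to the canonical near-vector space $((F,\boxplus_\gamma,\cdot),(F,\cdot))$.
   Context: A scalar group is a tuple $(F,\cdot,1,0,-1)$ where $(F,\cdot,1)$ is a monoid, $0\ne1$, $0\alpha=\alpha0=0$, $\{1,-1\}$ is exactly the solution set of $x^2=1$, and $(F\setminus\{0\},\cdot)$ is a group. A left near-field $(F,+,\cdot)$ is a set with a group operation $+$ (identity $0$), an associative multiplication such that $(F\setminus\{0\},\cdot)$ is a group and $0\cdot\alpha=0$, and the left distributive law $\gamma(\alpha+\beta)=\gamma\alpha+\gamma\beta$. A (left) near-vector space is a pair $((V,\boxplus,\boxdot),(F,\cdot))$ where $(F,\cdot)$ is a scalar group, $(V,\boxplus)$ an abelian group, and $\boxdot:F\times V\to V$ satisfies $1\boxdot v=v$, $\alpha\boxdot(\beta\boxdot v)=(\alpha\beta)\boxdot v$, $\alpha\boxdot(v\boxplus w)=\alpha\boxdot v\boxplus\alpha\boxdot w$, $(-1)\boxdot v=\boxminus v$, $0\boxdot v=0$, freeness ($\alpha\boxdot v=\beta\boxdot v$ implies $v=0$ or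 $\alpha=\beta$), and the quasi-kernel $Q(V)=\{v\in V:\forall\alpha,\beta\in F\ \exists\gamma\in F,\ \alpha\boxdot v\boxplus\beta\boxdot v=\gamma\boxdot v\}$ generates $(V,\boxplus)$. For $u\in Q(V)\setminus\{0\}$, $\alpha+_u\beta$ denotes the unique $\gamma\in F$ with $\alpha\boxdot u\boxplus\beta\boxdot u=\gamma\boxdot u$. An isomorphism $(\Psi,\varphi)$ from $((V_1,\boxplus_1,\boxdot_1),(F_1,\cdot_1))$ to $((V_2,\boxplus_2,\boxdot_2),(F_2,\cdot_2))$ consists of an additive bijection $\Psi:V_1\to V_2$ and a group isomorphism $\varphi:(F_1\setminus\{0\},\cdot_1)\to(F_2\setminus\{0\},\cdot_2)$ with $\Psi(\alpha\boxdot_1u)=\varphi(\alpha)\boxdot_2\Psi(u)$ for all $u\in V_1$, $\alpha\in F_1\setminus\{0\}$. The canonical near-vector space of a left near-field $(F,+,\cdot)$ is $((F,+,\cdot),(F,\cdot))$, the action being the multiplication. *)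

(* Defs.v *)
Definition is_scalar_group (F : Type) (mul : F -> F -> F) (one zero m1 : F)
  : Prop :=
  (forall a b c, mul a (mul b c) = mul (mul a b) c) /\
  (forall a, mul one a = a /\ mul a one = a) /\
  zero <> one /\
  (forall a, mul zero a = zero /\ mul a zero = zero) /\
  (forall x, mul x x = one <-> (x = one \/ x = m1)) /\
  (forall a b, a <> zero -> b <> zero -> mul a b <> zero) /\
  (forall a, a <> zero ->
     exists b, b <> zero /\ mul a b = one /\ mul b a = one).

Definition is_abelian_group (V : Type) (add : V -> V -> V) (vz : V)
  (vopp : V -> V) : Prop :=
  (forall u v w, add u (add v w) = add (add u v) w) /\
  (forall u v, add u v = add v u) /\
  (forall u, add vz u = u) /\
  (forall u, add (vopp u) u = vz).

Definition in_quasi_kernel (V F : Type) (add : V -> V -> V)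
  (act : F -> V -> V) (v : V) : Prop :=
  forall a b : F, exists c : F, add (act a v) (act b v) = act c v.

Definition is_near_vector_space (V F : Type)
  (add : V -> V -> V) (vz : V) (vopp : V -> V) (act : F -> V -> V)
  (mul : F -> F -> F) (one zero m1 : F) : Prop :=
  is_scalar_group F mul one zero m1 /\
  is_abelian_group V add vz vopp /\
  (forall v, act one v = v) /\
  (forall a b v, act a (act b v) = act (mul a b) v) /\
  (forall a v w, act a (add v w) = add (act a v) (act a w)) /\
  (forall v, act m1 v = vopp v) /\
  (forall v, act zero v = vz) /\
  (forall a b v, act a v = act b v -> v = vz \/ a = b) /\
  (* the quasi-kernel generates (V, add): every subgroup containing Q(V)
     is all of V *)
  (forall S : V -> Prop,
     S vz -> (forall u w, S u -> S w -> S (add u w)) ->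
     (forall u, S u -> S (vopp u)) ->
     (forall q, in_quasi_kernel V F add act q -> S q) ->
     forall v, S v).

Definition is_left_near_field (F : Type) (plus mul : F -> F -> F) (zero : F)
  : Prop :=
  (forall a b c, plus a (plus b c) = plus (plus a b) c) /\
  (forall a, plus zero a = a /\ plus a zero = a) /\
  (forall a, exists b, plus a b = zero /\ plus b a = zero) /\
  (forall a b c, mul a (mul b c) = mul (mul a b) c) /\
  (forall a b, a <> zero -> b <> zero -> mul a b <> zero) /\
  (exists e, e <> zero /\
     forall a, a <> zero ->
       mul e a = a /\ mul a e = a /\
       exists b, b <> zero /\ mul a b = e /\ mul b a = e) /\
  (forall a, mul zero a = zero) /\
  (forall c a b, mul c (plus a b) = plus (mul c a) (mul c b)).

(* Isomorphism (Psi, phi) of near-vector spaces.  [phi] is only meaningful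
   on F1 \ {0}; it is required to be a group isomorphism
   (F1 \ {0}, mul1) -> (F2 \ {0}, mul2). *)
Definition is_nvs_isomorphism (V1 F1 V2 F2 : Type)
  (add1 : V1 -> V1 -> V1) (act1 : F1 -> V1 -> V1)
  (mul1 : F1 -> F1 -> F1) (zero1 : F1)
  (add2 : V2 -> V2 -> V2) (act2 : F2 -> V2 -> V2)
  (mul2 : F2 -> F2 -> F2) (zero2 : F2)
  (Psi : V1 -> V2) (phi : F1 -> F2) : Prop :=
  (forall u v, Psi (add1 u v) = add2 (Psi u) (Psi v)) /\
  (forall u v, Psi u = Psi v -> u = v) /\
  (forall w, exists u, Psi u = w) /\
  (forall a, a <> zero1 -> phi a <> zero2) /\
  (forall a b, a <> zero1 -> b <> zero1 -> phi (mul1 a b) = mul2 (phi a) (phi b)) /\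
  (forall a b, a <> zero1 -> b <> zero1 -> phi a = phi b -> a = b) /\
  (forall c, c <> zero2 -> exists a, a <> zero1 /\ phi a = c) /\
  (forall u a, a <> zero1 -> Psi (act1 a u) = act2 (phi a) (Psi u)).

(* Main.v *)
Require Import Defs.
From Stdlib Require Import Classical ClassicalEpsilon.

Theorem mainTheorem8 (F : Type) (mul : F -> F -> F) (one zero m1 : F)
  (add : F -> F -> F) (vz : F) (vopp : F -> F) (act : F -> F -> F) :
  is_near_vector_space F F add vz vopp act mul one zero m1 ->
  (forall x : F, exists a : F, act a one = x) ->
  forall gamma : F, gamma <> vz ->
    in_quasi_kernel F F add act gamma /\
    (forall a b : F, exists! d : F, add (act a gamma) (act b gamma) = act d gamma) /\
    (forall plus_g : F -> F -> F,
       (forall a b : F, add (act a gamma) (act b gamma) = act (plus_g a b) gamma) ->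
       is_left_near_field F plus_g mul zero /\
       (exists opp_g : F -> F,
          is_near_vector_space F F plus_g zero opp_g mul mul one zero m1) /\
       exists (Psi : F -> F) (phi : F -> F),
         is_nvs_isomorphism F F F F add act mul zero plus_g mul mul zero Psi phi).
Proof.
  intros H surj gamma Hg.
  destruct H as [SG [AG [Aone [Amul [Adist [Am1 [Azero [Afree Agen]]]]]]]].
  pose proof SG as SG0.
  destruct SG as [Massoc [Mone [Z1 [Mzero [Msq [Mclos Minv]]]]]].
  destruct AG as [Vassoc [Vcomm [Vzl Vinv]]].
  assert (inj : forall a b, act a gamma = act b gamma -> a = b).
  { intros a b E. destruct (Afree a b gamma E); [contradiction|assumption]. }
  assert (surjg : forall x, exists c, act c gamma = x).
  { destruct (surj gamma) as [al Hal].
    assert (Hnz : al <> zero).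
    { intro E; subst al. apply Hg. rewrite <- Hal. apply Azero. }
    destruct (Minv al Hnz) as [be [_ [Hab Hba]]].
    intro x; destruct (surj x) as [c Hc]. exists (mul c be).
    rewrite <- Hal, Amul, <- Massoc, Hba, (proj2 (Mone c)). exact Hc. }
  split.
  { intros a b. destruct (surjg (add (act a gamma) (act b gamma))) as [c Hc].
    exists c. symmetry; exact Hc. }
  split.
  { intros a b. destruct (surjg (add (act a gamma) (act b gamma))) as [c Hc].
    exists c. split; [symmetry; exact Hc|].
    intros d Hd. apply inj. rewrite Hc. exact Hd. }
  intros plus_g Hp.
  assert (key : forall a b, act (plus_g a b) gamma = add (act a gamma) (act b gamma)).
  { intros; symmetry; apply Hp. }
  assert (Passoc : forall a b c, plus_g a (plus_g b c) = plus_g (plus_g a b) c).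
  { intros; apply inj; rewrite !key; apply Vassoc. }
  assert (Pzl : forall a, plus_g zero a = a).
  { intros; apply inj; rewrite key, Azero, Vzl; reflexivity. }
  assert (Pcomm : forall a b, plus_g a b = plus_g b a).
  { intros; apply inj; rewrite !key; apply Vcomm. }
  assert (Pinv : forall a, plus_g (mul m1 a) a = zero).
  { intros; apply inj; rewrite key, Azero, <- Amul, Am1; apply Vinv. }
  assert (Pdist : forall c a b, mul c (plus_g a b) = plus_g (mul c a) (mul c b)).
  { intros; apply inj. rewrite key, <- !Amul, key; apply Adist. }
  split.
  { split; [exact Passoc|]. split.
    { intro a; split; [apply Pzl| rewrite Pcomm; apply Pzl]. }
    split.
    { intro a; exists (mul m1 a); split; [rewrite Pcomm|]; apply Pinv. }
    split; [exact Massoc|]. split; [exact Mclos|]. split.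
    { exists one. split; [intro E; apply Z1; symmetry; exact E|].
      intros a Ha. split; [apply Mone|]. split; [apply Mone|].
      destruct (Minv a Ha) as [b [Hb [H1 H2]]]. exists b; auto. }
    split; [intro a; apply Mzero|]. exact Pdist. }
  split.
  { exists (mul m1). split; [exact SG0|]. split.
    { split; [exact Passoc|]. split; [exact Pcomm|]. split; [exact Pzl|exact Pinv]. }
    split; [intro; apply Mone|]. split; [exact Massoc|]. split; [exact Pdist|].
    split; [reflexivity|]. split; [intro; apply Mzero|]. split.
    { intros a b v E. destruct (classic (v = zero)) as [Hv|Hv]; [left; exact Hv|right].
      destruct (Minv v Hv) as [w [_ [H1 H2]]].
      rewrite <- (proj2 (Mone a)), <- (proj2 (Mone b)), <- H1, !Massoc, E.
      reflexivity. }
    intros S _ _ _ HQ v. apply HQ. intros a b.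
    destruct (classic (v = zero)) as [Hv|Hv].
    { subst v. exists zero. rewrite !(proj2 (Mzero _)). apply Pzl. }
    destruct (Minv v Hv) as [w [_ [H1 H2]]].
    exists (mul (plus_g (mul a v) (mul b v)) w).
    rewrite <- Massoc, H2, (proj2 (Mone _)). reflexivity. }
  assert (HP : exists Psi : F -> F, forall u, act (Psi u) gamma = u).
  { exists (fun u => proj1_sig (constructive_indefinite_description _ (surjg u))).
    intro u. exact (proj2_sig (constructive_indefinite_description _ (surjg u))). }
  destruct HP as [Psi HPsi].
  exists Psi, (fun a => a).
  split.
  { intros u v; apply inj. rewrite HPsi, key, !HPsi. reflexivity. }
  split.
  { intros u v E. rewrite <- (HPsi u), <- (HPsi v), E. reflexivity. }
  split.
  { intro w; exists (act w gamma); apply inj; rewrite HPsi; reflexivity. }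
  split; [auto|]. split; [auto|]. split; [auto|]. split.
  { intros c Hc; exists c; auto. }
  intros u a _. apply inj. rewrite HPsi, <- Amul, HPsi. reflexivity.
Qed.
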